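(* Let $m<n$, let $A\in\mathbb{R}^{m\times n}$ and $b\in\mathbb{R}^{m}$, and assume that the system $Ax=b$ has a solution. Partition $A=[B~\tilde{B}]$ with $B\in\mathbb{R}^{m\times m}$ and $\tilde{B}\in\mathbb{R}^{m\times(n-m)}$. Assume that every diagonal entry of $B$ is nonzero and that every row $\tilde{B}_i$ of $\tilde{B}$ is nonzero. Let $D=\operatorname{diag}(B)$ (the diagonal matrix with the diagonal of $B$), $R=B-D$, $N(\tilde{B})=\operatorname{diag}(\|\tilde{B}_1\|_1,\ldots,\|\tilde{B}_m\|_1)$, and let $s(\tilde{B})\in\mathbb{R}^{(n-m)\times m}$ be the matrix whose $(j,i)$ entry is the sign ($1$, $0$ or $-1$) of the $(j,i)$ entry of $\tilde{B}^T$. Starting from any $x^{(0)}=\begin{bmatrix}x_1^{(0)}\\ x_2^{(0)}\end{bmatrix}$ with $x_1^{(0)}\in\mathbb{R}^m$, $x_2^{(0)}\in\mathbb{R}^{n-m}$, define for $k\ge 0$ the generalized Jacobi iteration $$x_2^{(k+1)}=x_2^{(k)}+s(\tilde{B})\,d^{(k)},\qquad d^{(k)}_i=\frac{b_i-B_ix_1^{(k)}-\tilde{B}_ix_2^{(k)}}{m\|\tilde{B}_i\|_1}\ (i=1,\ldots,m),$$ $$x_1^{(k+1)}=D^{-1}\big(-Rx_1^{(k)}+b-\tilde{B}x_2^{(k+1)}\big),\qquad x^{(k+1)}=\begin{bmatrix}x_1^{(k+1)}\\ x_2^{(k+1)}\end{bmatrix},$$ where $B_i,\tilde{B}_i$ denote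 the $i$th rows of $B,\tilde{B}$. If, for some matrix norm $\|\cdot\|$ on $\mathbb{R}^{m\times m}$, $$\|I-BD^{-1}\|<1\quad\text{and}\quad \|mI-\tilde{B}\,s(\tilde{B})\,N(\tilde{B})^{-1}\|<m,$$ then the sequence $(x^{(k)})$ converges and its limit $x=\lim_k x^{(k)}$ is a solution of $Ax=b$.
   Context: $\|\cdot\|_1$ denotes the $\ell_1$-norm of a vector. The $x_2$-update is the iterative method of Wheaton–Awoniyi applied to $\tilde{B}y=b-Bx_1^{(k)}$, and the $x_1$-update is one Jacobi step for $Bz=b-\tilde{B}x_2^{(k+1)}$ starting at $x_1^{(k)}$. *)

(* Defs.v *)
From HB Require Import structures.
From mathcomp Require Import all_boot all_order all_algebra.
From mathcomp Require Import all_classical all_reals all_analysis.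
Set Implicit Arguments. Unset Strict Implicit. Unset Printing Implicit Defensive.
Import Order.TTheory GRing.Theory Num.Theory.
Import numFieldNormedType.Exports.
Local Open Scope ring_scope.

Section GJ.
Variables (R : realType) (m p : nat).

Definition is_matrix_norm (nu : 'M[R]_m -> R) : Prop :=
  [/\ forall M, 0 <= nu M,
      forall M, nu M = 0 -> M = 0,
      forall (a : R) M, nu (a *: M) = `|a| * nu M,
      forall M N, nu (M + N) <= nu M + nu N
    & forall M N, nu (M *m N) <= nu M * nu N].

Definition diagpart (B : 'M[R]_m) : 'M[R]_m := diag_mx (\row_i B i i).

Definition row_l1 (Bt : 'M[R]_(m, p)) (i : 'I_m) : R := \sum_j `|Bt i j|.

Definition Nmat (Bt : 'M[R]_(m, p)) : 'M[R]_m := diag_mx (\row_i row_l1 Bt i).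

Definition smat (Bt : 'M[R]_(m, p)) : 'M[R]_(p, m) := \matrix_(j, i) Num.sg (Bt i j).

Definition gj_step (B : 'M[R]_m) (Bt : 'M[R]_(m, p)) (b : 'cV[R]_m)
    (x : 'cV[R]_m * 'cV[R]_p) : 'cV[R]_m * 'cV[R]_p :=
  let x1 := x.1 in let x2 := x.2 in
  let d : 'cV[R]_m := \col_i ((b i 0 - (B *m x1) i 0 - (Bt *m x2) i 0)
                              / (m%:R * row_l1 Bt i)) in
  let x2' := x2 + smat Bt *m d in
  let x1' := invmx (diagpart B) *m (- (B - diagpart B) *m x1 + b - Bt *m x2') in
  (x1', x2').

Definition gj_iter B Bt b (x0 : 'cV[R]_m * 'cV[R]_p) (k : nat) : 'cV[R]_(m + p) :=
  let x := iter k (gj_step B Bt b) x0 in col_mx x.1 x.2.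

End GJ.

(* Main.v *)
Require Import Defs.
From HB Require Import structures.
From mathcomp Require Import all_boot all_order all_algebra.
From mathcomp Require Import all_classical all_reals all_analysis.
From mathcomp Require Import ring lra.
Import Order.TTheory GRing.Theory Num.Theory.
Import numFieldNormedType.Exports.
Local Open Scope classical_set_scope.
Local Open Scope ring_scope.

Lemma mxnorm_le {R : realType} {m n} (x : 'M[R]_(m, n)) (c : R) :
  0 <= c -> (forall i j, `|x i j| <= c) -> `|x| <= c.
Proof.
move=> c0 H; change `|x| with (mx_norm x); rewrite mx_normrE.
by apply: bigmax_le => // [[i j]] _ /=.
Qed.

Lemma le_sum_term {R : realType} {I : finType} (F : I -> R) i :
  (forall j, 0 <= F j) -> F i <= \sum_j F j.
Proof.
move=> H; rewrite (bigD1 i) //= lerDl; apply: sumr_ge0 => j _; exact: H.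
Qed.

Lemma delta_sandwich {R : realType} {m} (X : 'M[R]_m) a b :
  delta_mx a a *m X *m delta_mx b b = X a b *: delta_mx a b.
Proof.
apply/matrixP => i j; rewrite !mxE.
rewrite (bigD1 b) //= big1 ?addr0; last first.
  by move=> l /negbTE lb; rewrite !mxE lb /= mulr0.
rewrite !mxE (bigD1 a) //= big1 ?addr0; last first.
  by move=> l /negbTE la; rewrite !mxE la andbF mul0r.
rewrite !mxE !eqxx /= andbT.
by case: (i == a); case: (j == b); rewrite /= ?mulr1 ?mul1r ?mulr0 ?mul0r.
Qed.
Lemma zmod_id1 (V : zmodType) (a b c d e: V) :
  -(a - d) + b - (c + e) = d + (b - a - c - e).
Proof.
rewrite opprB opprD !addrA; congr (_ - _ - _).
by rewrite -!addrA [- a + b]addrC.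
Qed.

Lemma zmod_id2 (V : zmodType) (b P Q S W : V) :
  b - P - Q - S - W = b - P - S - W - Q.
Proof. by rewrite (addrAC (b - P) (- Q)) [LHS]addrAC. Qed.

Lemma zmod_id3 (V : zmodType) (x P y : V) : y + P = x + (P - (x - y)).
Proof. by rewrite opprB addrCA [y - x]addrC addNKr addrC. Qed.

Lemma zmod_id4 (V : zmodType) (x P y : V) : P + y = x - ((x - y) - P).
Proof. by rewrite opprB -zmod_id3 addrC. Qed.

Lemma zmod_id5 (V : zmodType) (b P S : V) : P + S + (b - P - S) = b.
Proof. by rewrite -[b - P - S]addrA -opprD addrC addNKr. Qed.

Lemma Ninv_eq (R : realType) m p (Bt : 'M[R]_(m, p)) :
  (forall i, row_l1 Bt i != 0) ->
  invmx (Nmat Bt) = diag_mx (\row_i (row_l1 Bt i)^-1).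
Proof.
move=> hl.
have E : Nmat Bt *m diag_mx (\row_i (row_l1 Bt i)^-1) = 1%:M.
  rewrite /Nmat mulmx_diag -diag_const_mx; congr diag_mx.
  by apply/matrixP => i j; rewrite !mxE divff.
have U : Nmat Bt \in unitmx.
  by rewrite unitmxE /Nmat det_diag unitfE; apply/prodf_neq0 => i _; rewrite mxE.
by rewrite -[LHS]mulmx1 -E mulmxA mulVmx // mul1mx.
Qed.

Lemma step_formula {R : realType} {m p} (B : 'M[R]_m) (Bt : 'M[R]_(m, p)) b x :
  (0 < m)%N -> diagpart B \in unitmx -> (forall i, row_l1 Bt i != 0) ->
  let r := b - B *m x.1 - Bt *m x.2 in
  let t := (m%:R)^-1 *: (smat Bt *m (invmx (Nmat Bt) *m r)) in
  gj_step B Bt b x = (x.1 + invmx (diagpart B) *m (r - Bt *m t), x.2 + t).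
Proof.
move=> hm hD hl r t.
have ed : \col_i ((b i 0 - (B *m x.1) i 0 - (Bt *m x.2) i 0) / (m%:R * row_l1 Bt i))
   = (m%:R)^-1 *: (invmx (Nmat Bt) *m r).
  rewrite Ninv_eq // mul_diag_mx; apply/matrixP => i j; rewrite !mxE.
  rewrite (ord1 j).
  have m0 : (m%:R : R) != 0 by rewrite pnatr_eq0 -lt0n.
  have := hl i; move: (row_l1 Bt i) => l l0.
  by field; rewrite m0 l0.
rewrite /gj_step /= ed -scalemxAr -/t; congr (_, _).
rewrite -{2}[x.1]mul1mx -(mulVmx hD) -mulmxA -mulmxDr; congr (_ *m _).
rewrite mulmxDr mulNmx mulmxBl /r; exact: zmod_id1.
Qed.

Lemma step_props {R : realType} {m p} (B : 'M[R]_m) (Bt : 'M[R]_(m, p)) b x :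
  (0 < m)%N -> diagpart B \in unitmx -> (forall i, row_l1 Bt i != 0) ->
  let res y := b - B *m y.1 - Bt *m y.2 in
  let Dinv := invmx (diagpart B) in
  let M2 := 1%:M - (m%:R)^-1 *: (Bt *m smat Bt *m invmx (Nmat Bt)) in
  let C := (1%:M - B *m Dinv) *m M2 in
  let G := col_mx (Dinv *m M2) ((m%:R)^-1 *: (smat Bt *m invmx (Nmat Bt))) in
  res (gj_step B Bt b x) = C *m res x /\
  col_mx (gj_step B Bt b x).1 (gj_step B Bt b x).2 = col_mx x.1 x.2 + G *m res x.
Proof.
move=> hm hD hl res Dinv M2 C G.
rewrite (step_formula B Bt b x hm hD hl) /=.
set r := b - B *m x.1 - Bt *m x.2.
set t := (m%:R)^-1 *: (smat Bt *m (invmx (Nmat Bt) *m r)).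
have e2 : r - Bt *m t = M2 *m r.
  by rewrite /M2 mulmxBl mul1mx /t -scalemxAl -scalemxAr !mulmxA.
split.
  have -> : res (x.1 + Dinv *m (r - Bt *m t), x.2 + t) =
            (r - Bt *m t) - B *m (Dinv *m (r - Bt *m t)).
    rewrite /res /= mulmxDr [Bt *m (x.2 + t)]mulmxDr.
    set Q0 := B *m (Dinv *m _); rewrite /r.
    move: (B *m x.1) Q0 (Bt *m x.2) (Bt *m t) => P Q S W.
    by rewrite !opprD !addrA zmod_id2.
  by rewrite e2 /C /res -/r -mulmxA (mulmxBl 1%:M (B *m Dinv)) mul1mx -!mulmxA.
rewrite mul_col_mx add_col_mx e2 -mulmxA; congr col_mx.
by rewrite /t -scalemxAl mulmxA.
Qed.

Theorem mainTheorem1 (R : realType) (m p : nat) (hp : (0 < p)%N)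
    (B : 'M[R]_m) (Bt : 'M[R]_(m, p)) (b : 'cV[R]_m)
    (hsol : exists x : 'cV[R]_(m + p), row_mx B Bt *m x = b)
    (hdiag : forall i : 'I_m, B i i != 0)
    (hrow : forall i : 'I_m, exists j : 'I_p, Bt i j != 0)
    (nu : 'M[R]_m -> R) (hnu : is_matrix_norm nu)
    (h1 : nu (1%:M - B *m invmx (diagpart B)) < 1)
    (h2 : nu (m%:R%:M - Bt *m smat Bt *m invmx (Nmat Bt)) < m%:R)
    (x0 : 'cV[R]_m * 'cV[R]_p) :
  exists xlim : 'cV[R]_(m + p),
    gj_iter B Bt b x0 @ \oo --> xlim /\ row_mx B Bt *m xlim = b.
Proof.
case: hnu => nu0 nuE nuZ nuD nuM.
have mpos : (0 : R) < m%:R := le_lt_trans (nu0 _) h2.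
have hm : (0 < m)%N by rewrite -(ltr0n R).
have hD : diagpart B \in unitmx.
  by rewrite unitmxE /diagpart det_diag unitfE; apply/prodf_neq0 => i _; rewrite mxE.
have hl : forall i, row_l1 Bt i != 0.
  move=> i; have [j hj] := hrow i; rewrite gt_eqF // /row_l1.
  apply: (lt_le_trans _ (le_sum_term (fun k => `|Bt i k|) j _)).
    by rewrite normr_gt0.
  by move=> k; exact: normr_ge0.
pose res (y : 'cV[R]_m * 'cV[R]_p) := b - B *m y.1 - Bt *m y.2.
pose Dinv := invmx (diagpart B).
pose mi := (m%:R : R)^-1.
pose X := Bt *m smat Bt *m invmx (Nmat Bt).
pose M2 := 1%:M - mi *: X.
pose C := (1%:M - B *m Dinv) *m M2.
pose G := col_mx (Dinv *m M2) (mi *: (smat Bt *m invmx (Nmat Bt))).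
have SP x : res (gj_step B Bt b x) = C *m res x /\
  col_mx (gj_step B Bt b x).1 (gj_step B Bt b x).2 = col_mx x.1 x.2 + G *m res x
  := step_props B Bt b x hm hD hl.
have nuM2 : nu M2 < 1.
  have -> : M2 = mi *: (m%:R%:M - X).
    by rewrite scalerBr scale_scalar_mx mulVf // gt_eqF.
  rewrite nuZ ger0_norm ?invr_ge0 ?ltW //.
  have key : mi * m%:R = 1 by rewrite mulVf // lt0r_neq0.
  apply: (lt_le_trans (y := mi * m%:R)); last by rewrite key.
  by rewrite ltr_pM2l ?invr_gt0.
set q := nu C.
have q0 : 0 <= q by apply: nu0.
have q1 : q < 1.
  have := nuM (1%:M - B *m Dinv) M2; rewrite -/C -/q => hq.
  have := nu0 (1%:M - B *m Dinv); have := nu0 M2; rewrite /Dinv in hq *.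
  move: h1 nuM2 hq; move: (nu _) (nu M2) => a c; nra.
pose Cp k := iter k (mulmx C) 1%:M.
have CpS k : Cp k.+1 = C *m Cp k by [].
have CpC k : Cp k *m C = C *m Cp k.
  elim: k => [|k IH]; first by rewrite /Cp /= mul1mx mulmx1.
  by rewrite CpS -mulmxA IH.
have nuCp k : nu (Cp k) <= q ^+ k * nu 1%:M.
  elim: k => [|k IH]; first by rewrite expr0 mul1r.
  rewrite CpS exprS -mulrA; apply: (le_trans (nuM _ _)).
  by rewrite ler_wpM2l.
have hU : 1%:M - C \in unitmx.
  rewrite unitmxE unitfE; apply/negP => /det0P [v vn0 hv].
  pose V : 'M[R]_m := \matrix_(i, j) v 0 j.
  have VM Y : V *m Y = \matrix_(i, j) (v *m Y) 0 j.
    by apply/matrixP => i j; rewrite !mxE; apply: eq_bigr => k _; rewrite !mxE.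
  have VC : V = V *m C.
    apply/eqP; rewrite -subr_eq0 -{1}[V]mulmx1 -mulmxBr VM hv.
    by apply/eqP/matrixP => i j; rewrite !mxE.
  have nV : nu V = 0.
    have := nuM V C; rewrite -VC -/q => h.
    have := nu0 V; move: h; move: (nu V) => a; nra.
  move/negP: vn0; apply; apply/eqP/matrixP => i j.
  have := congr1 (fun M : 'M[R]_m => M (Ordinal hm) j) (nuE _ nV).
  by rewrite !mxE (ord1 i).
pose E (a c : 'I_m) : 'M[R]_m := delta_mx a c.
have nuEpos a c : 0 < nu (E a c).
  rewrite lt_def nu0 andbT; apply/negP => /eqP /nuE /matrixP /(_ a c).
  by rewrite !mxE !eqxx /= => /eqP; rewrite oner_eq0.
pose Kab a c := nu (E a a) * nu 1%:M * nu (E c c) / nu (E a c).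
have Kab0 a c : 0 <= Kab a c.
  by rewrite /Kab divr_ge0 ?mulr_ge0 ?nu0 // ltW.
pose K := \sum_a \sum_c Kab a c.
have entry k a c : `|Cp k a c| <= K * q ^+ k.
  have h1e : `|Cp k a c| * nu (E a c) <= nu (E a a) * (q ^+ k * nu 1%:M) * nu (E c c).
    rewrite -nuZ -delta_sandwich -/(E a a) -/(E c c).
    apply: (le_trans (nuM _ _)); rewrite ler_wpM2r ?nu0 //.
    by apply: (le_trans (nuM _ _)); rewrite ler_wpM2l ?nu0.
  have h2e : `|Cp k a c| <= Kab a c * q ^+ k.
    apply: (le_trans (y := (nu (E a a) * (q ^+ k * nu 1%:M) * nu (E c c)) / nu (E a c))).
      by rewrite ler_pdivlMr ?nuEpos.
    by rewrite /Kab le_eqVlt; apply/orP; left; apply/eqP; ring.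
  apply: (le_trans h2e); rewrite ler_wpM2r ?exprn_ge0 //.
  apply: (le_trans _ (le_sum_term (fun a => \sum_c Kab a c) a _)).
    exact: (le_sum_term (fun c => Kab a c) c (Kab0 a)).
  by move=> a'; apply: sumr_ge0 => c' _.
pose Q := invmx (1%:M - C).
pose r0 := res x0.
pose w := Q *m r0.
pose xl := col_mx x0.1 x0.2 + G *m w.
have hw : (1%:M - C) *m w = r0 by rewrite /w mulmxA mulmxV // mul1mx.
have Inv k : res (iter k (gj_step B Bt b) x0) = Cp k *m r0 /\
   col_mx (iter k (gj_step B Bt b) x0).1 (iter k (gj_step B Bt b) x0).2
     = xl - G *m (Cp k *m w).
  elim: k => [|k [IH1 IH2]].
    by rewrite /= mul1mx mul1mx /xl addrK.
  have [S1 S2] := SP (iter k (gj_step B Bt b) x0).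
  rewrite /= S1 S2 IH1 IH2 mulmxA -CpS; split => //.
  have -> : Cp k *m r0 = Cp k *m w - C *m (Cp k *m w).
    by rewrite -hw mulmxA mulmxBr mulmx1 mulmxBl CpC mulmxA.
  by rewrite mulmxBr addrA subrK CpS -mulmxA.
exists xl; split; last first.
  have AG : row_mx B Bt *m G = 1%:M - C.
    rewrite /G mul_row_col /C mulmxBl mul1mx mulmxA -scalemxAr mulmxA -/X.
    move: (B *m Dinv *m M2) => P; rewrite /M2.
    exact: zmod_id4.
  rewrite /xl mulmxDr mul_row_col mulmxA AG hw /r0 /res.
  exact: zmod_id5.
have eqf : gj_iter B Bt b x0 = fun k => xl - G *m (Cp k *m w).
  by apply/funext => k; rewrite /gj_iter (Inv k).2.
pose gS := \sum_i \sum_a `|G i a|.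
pose wS := \sum_j \sum_c `|w c j|.
have K0 : 0 <= K by apply: sumr_ge0 => a _; apply: sumr_ge0 => c _.
have gS0 : 0 <= gS by apply: sumr_ge0 => a _; apply: sumr_ge0 => c _.
have wS0 : 0 <= wS by apply: sumr_ge0 => a _; apply: sumr_ge0 => c _.
pose cst := gS * K * wS.
have bound k : `|G *m (Cp k *m w)| <= cst * q ^+ k.
  apply: mxnorm_le; first by rewrite mulr_ge0 ?exprn_ge0 // /cst !mulr_ge0.
  move=> i j; rewrite !mxE.
  apply: le_trans (ler_norm_sum _ _ _) _.
  apply: (le_trans (y := \sum_a `|G i a| * (K * q ^+ k * \sum_c `|w c j|))).
    apply: ler_sum => a _; rewrite normrM ler_wpM2l //.
    rewrite !mxE; apply: le_trans (ler_norm_sum _ _ _) _.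
    rewrite mulr_sumr; apply: ler_sum => c _; rewrite normrM ler_wpM2r //.
  rewrite -mulr_suml.
  have hg : \sum_a `|G i a| <= gS.
    exact: (le_sum_term (fun i => \sum_a `|G i a|) i (fun _ => sumr_ge0 _ (fun _ _ => normr_ge0 _))).
  have hw' : \sum_c `|w c j| <= wS.
    exact: (le_sum_term (fun j => \sum_c `|w c j|) j (fun _ => sumr_ge0 _ (fun _ _ => normr_ge0 _))).
  have qk : 0 <= q ^+ k by rewrite exprn_ge0.
  apply: (le_trans (y := gS * (K * q ^+ k * wS))); last first.
    by rewrite le_eqVlt; apply/orP; left; apply/eqP; rewrite /cst; ring.
  apply: ler_pM => //.
    by apply: sumr_ge0 => a _.
    by rewrite !mulr_ge0 //; apply: sumr_ge0 => a _.
  by rewrite ler_wpM2l // mulr_ge0.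
have h0 : (fun k => G *m (Cp k *m w)) @ \oo --> (0 : 'cV[R]_(m + p)).
  apply/norm_cvg0P.
  apply: (squeeze_cvgr (f := fun _ => 0) (h := fun k => cst * q ^+ k)).
  - by apply: nearW => k; rewrite normr_ge0 bound.
  - exact: cvg_cst.
  - rewrite -(mulr0 cst); apply: cvgMl_tmp; apply: cvg_expr.
    by rewrite ger0_norm.
rewrite eqf -[Y in _ --> Y]subr0.
exact: (cvgB (cvg_cst xl) h0).
Qed.
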